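(* Let $d\ge 2$ and let $\mathcal U,\mathcal H$ be as defined in the context. Then $\operatorname{rs}(\mathcal U,\mathcal H)\le 2^{d-1}$.
   Context: Let $d\ge 2$. Define $\mathcal U=\{(x_1,\dots,x_d): x_1,\dots,x_{d-1}\in\{-1,1\},\ x_d\in\{-(d-1),\dots,d-1\}\}$ (integers) and $\mathcal H=\{\{x\in\mathbb R^d:\sum_{i=1}^d a_ix_i=0\}: a_1,\dots,a_{d-1}\in\{0,1\},\ a_d=-1\}$. $\operatorname{rs}(\mathcal U,\mathcal H)=\max_{S}\,|\{p\in\mathcal U: p\in S\}|\cdot|\{h\in\mathcal H: S\subseteq h\}|$, the maximum over all affine subspaces $S\subseteq\mathbb R^d$. *)

(* Defs.v *)
From HB Require Import structures.
From mathcomp Require Import all_boot all_algebra.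
From mathcomp Require Import boolp.
Set Implicit Arguments. Unset Strict Implicit. Unset Printing Implicit Defensive.
Import GRing.Theory Num.Theory.
Local Open Scope ring_scope.

Section Defs.
Variables (R : realFieldType) (d : nat).

(* Coordinates are indexed by 'I_d; x_1,...,x_{d-1} are indices 0..d-2,
   x_d is index d-1. *)

(* Index type of U: sign vector (x_1..x_{d-1}) in {-1,1}^{d-1}
   (true = 1, false = -1) and t : 'I_(2d-1) with x_d = t - (d-1). *)
Definition Uidx := ({ffun 'I_d.-1 -> bool} * 'I_(2 * d - 1))%type.

Definition ptU (u : Uidx) : 'rV[R]_d :=
  \row_(i < d)
    match @insub nat (fun k => k < d.-1)%N _ (nat_of_ord i) with
    | Some j => if u.1 j then 1 else -1
    | None => (nat_of_ord u.2)%:R - (d.-1)%:R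
    end.

(* Index type of H: (a_1..a_{d-1}) in {0,1}^{d-1}; a_d = -1. *)
Definition Hidx := {ffun 'I_d.-1 -> bool}.

Definition coefH (a : Hidx) (i : 'I_d) : R :=
  match @insub nat (fun k => k < d.-1)%N _ (nat_of_ord i) with
  | Some j => (a j)%:R
  | None => -1
  end.

Definition inH (a : Hidx) (x : 'rV[R]_d) : bool :=
  \sum_(i < d) coefH a i * x 0 i == 0.

(* The (nonempty) affine subspace S = p + rowspace(W) of R^d. *)
Definition inS (p : 'rV[R]_d) (W : 'M[R]_d) (x : 'rV[R]_d) : bool :=
  (x - p <= W)%MS.

Definition nPts (p : 'rV[R]_d) (W : 'M[R]_d) : nat :=
  #|[set u : Uidx | inS p W (ptU u)]|.

Definition nHyps (p : 'rV[R]_d) (W : 'M[R]_d) : nat :=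
  #|[set a : Hidx | `[< forall x, inS p W x -> inH a x >] ]|.

End Defs.

(* Main.v *)
Require Import Defs.
From mathcomp Require Import all_boot all_algebra.
From mathcomp Require Import boolp.
Set Implicit Arguments. Unset Strict Implicit. Unset Printing Implicit Defensive.
Import GRing.Theory Num.Theory.

Section Aux.
Local Open Scope ring_scope.
Lemma cube (R : fieldType) m n (T : finType) (V : 'M[R]_(m, n)) (X : {set T})
  (g : T -> {ffun 'I_n -> bool}) (v : 'I_n -> bool -> R) :
  (forall j, v j true != v j false) ->
  {in X &, injective g} ->
  (forall x y, x \in X -> y \in X ->
     (\row_j v j (g x j) - \row_j v j (g y j) <= V)%MS) ->
  (#|X| <= 2 ^ \rank V)%N.
Proof.
move=> vinj ginj hV.
set B := row_base V; set A := B^T; set h := maxrankfun A.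
have rkA : \rank A = \rank V by rewrite /A mxrank_tr; apply/eqP; apply: row_base_free.
pose G (x : T) : {ffun 'I_(\rank A) -> bool} := [ffun i => g x (h i)].
have free : row_free (rowsub h A)^T.
  by rewrite /row_free mxrank_tr; have := maxrowsub_free A; rewrite /row_free => /eqP ->; rewrite rkA.
have -> : (2 ^ \rank V = #|{ffun 'I_(\rank A) -> bool}|)%N by rewrite card_ffun card_bool card_ord rkA.
rewrite -(@card_in_imset _ _ G X); first exact: max_card.
move=> x y Hx Hy GE; apply: ginj => //; apply/ffunP => j.
have hz := hV x y Hx Hy.
set z := (\row_j v j (g x j) - \row_j v j (g y j)) in hz.
rewrite -(eq_row_base V) -/B in hz.
have zE := mulmxKpV hz.
set c := z *m pinvmx B in zE.
have c0 : c *m (rowsub h A)^T = 0.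
  apply/rowP => i; rewrite mxE [RHS]mxE.
  have : z 0 (h i) = 0.
    rewrite /z !mxE; have := congr1 (fun f : {ffun _ -> bool} => f i) GE; rewrite /G !ffunE => ->.
    by rewrite subrr.
  move=> z0; rewrite -[RHS]z0 -zE mxE; apply: eq_bigr => k _; rewrite !mxE //.
have : c == 0 by rewrite -(mulmx_free_eq0 _ free) c0.
move/eqP => c00.
have : z 0 j = 0 by rewrite -zE c00 mul0mx mxE.
rewrite /z !mxE => /eqP; rewrite subr_eq0 => /eqP.
have := vinj j.
by case: (g x j); case: (g y j) => // H E; move: H; rewrite E ?eqxx // eq_sym E eqxx.
Qed.

Lemma insW n (j : 'I_n) :
  (insub (nat_of_ord (widen_ord (leqnSn n) j)) : option 'I_n) = Some j.
Proof. exact: valK. Qed.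

Lemma insM n :
  (insub (nat_of_ord (@ord_max n)) : option 'I_n) = None.
Proof. by rewrite insubF //= ltnn. Qed.

Variable R : realFieldType.

Lemma inHE n (a : Hidx n.+1) (x : 'rV[R]_n.+1) :
  inH a x = (\sum_(j < n) (a j)%:R * x 0 (widen_ord (leqnSn n) j) == x 0 ord_max).
Proof.
rewrite /inH big_ord_recr /= /coefH insM mulN1r subr_eq0.
by under eq_bigr => j _ do rewrite insW.
Qed.

Lemma ptUW n (u : Uidx n.+1) j :
  (ptU R u) 0 (widen_ord (leqnSn n) j) = if u.1 j then 1 else -1.
Proof. by rewrite /ptU mxE insW. Qed.

Lemma ptUM n (u : Uidx n.+1) :
  (ptU R u) 0 ord_max = (nat_of_ord u.2)%:R - n%:R.
Proof. by rewrite /ptU mxE insM. Qed.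

End Aux.

Theorem mainTheorem7 (R : realFieldType) (d : nat) (hd : (2 <= d)%N)
  (p : 'rV[R]_d) (W : 'M[R]_d) :
  (nPts p W * nHyps p W <= 2 ^ (d - 1))%N.
Proof.
case: d hd p W => [|n] // hn p W.
rewrite subn1 /=.
Local Open Scope ring_scope.
pose wd := widen_ord (leqnSn n).
pose P : 'M[R]_(n.+1, n) := colsub wd 1%:M.
have PE : forall m (M : 'M[R]_(m, n.+1)), M *m P = colsub wd M.
  by move=> m M; rewrite /P mulmx_colsub mulmx1.
set V2 := W *m P.
have hypW : forall a : Hidx n.+1, (forall x, inS p W x -> inH a x) ->
    forall w : 'rV[R]_n.+1, (w <= W)%MS ->
    \sum_(j < n) (a j)%:R * w 0 (wd j) = w 0 ord_max.
  move=> a Ha w Hw.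
  have Sp : inS p W p by rewrite /inS subrr sub0mx.
  have Spw : inS p W (p + w) by rewrite /inS addrC addKr.
  have := Ha _ Sp; have := Ha _ Spw; rewrite !inHE => /eqP E1 /eqP E2.
  move: E1; rewrite mxE -E2.
  under eq_bigr => j _ do rewrite mxE mulrDr.
  by rewrite big_split /= => /addrI.
rewrite /nPts /nHyps.
set Pts := [set u | _].
set Hs := [set a | _].
case: (set_0Vmem Hs) => [->|[a0 Ha0]]; first by rewrite cards0 muln0.
have Ha0' : forall x, inS p W x -> inH a0 x.
  by move: Ha0; rewrite inE => /asboolP.
have rk : (\rank V2 <= n)%N by apply: rank_leq_col.
have bP : (#|Pts| <= 2 ^ \rank V2)%N.
  apply: (@cube R _ n (Uidx n.+1) V2 Pts (fun u : Uidx n.+1 => u.1) (fun _ b => if b then 1 else -1)).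
  - move=> j /=; apply/eqP => h.
    have : (0 : R) < 1 by [].
    by rewrite h ltr0N1.
  - move=> [s t] [s' t']; rewrite !inE /= => Hu Hu' Es; subst s'.
    have := Ha0' _ Hu; have := Ha0' _ Hu'; rewrite !inHE !ptUM.
    under eq_bigr => j _ do rewrite ptUW.
    move=> E1; under eq_bigr => j _ do rewrite ptUW.
    move=> /eqP /= E2; move/eqP: E1 => /=; rewrite E2 => /addIr /eqP; rewrite eqr_nat => /eqP Et.
    by congr pair; apply: val_inj.
  - move=> u u'; rewrite !inE => Hu Hu'.
    have -> : (\row_j (if u.1 j then 1 else -1) - \row_j (if u'.1 j then 1 else -1))
              = (ptU R u - ptU R u') *m P :> 'rV[R]_n.
      by rewrite PE; apply/rowP => j; rewrite !mxE /wd !insW.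
    apply: submxMr.
    have -> : ptU R u - ptU R u' = (ptU R u - p) + (-1) *: (ptU R u' - p).
      by rewrite scaleN1r opprB addrA subrK.
    by apply: addmx_sub => //; apply: scalemx_sub.
have bH : (#|Hs| <= 2 ^ \rank (kermx V2^T))%N.
  apply: (@cube R _ n (Hidx n.+1) (kermx V2^T) Hs (fun a : Hidx n.+1 => a) (fun _ b => (b : nat)%:R)).
  - by move=> j /=; rewrite oner_eq0.
  - by move=> x y _ _.
  - move=> a b; rewrite !inE => /asboolP Ha /asboolP Hb.
    apply/sub_kermxP; rewrite /V2 PE; apply/rowP => k.
    rewrite !mxE.
    under eq_bigr => j _ do rewrite !mxE mulrBl.
    rewrite sumrB.
    have E : forall c : Hidx n.+1, (forall x, inS p W x -> inH c x) ->
      \sum_(j < n) (c j : nat)%:R * W k (wd j) = W k ord_max.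
      move=> c Hc; have := hypW c Hc (row k W) (row_sub k W); rewrite [X in _ = X -> _]mxE => <-.
      by apply: eq_bigr => j _; rewrite mxE.
    by rewrite (E a Ha) (E b Hb) subrr.
rewrite mxrank_ker mxrank_tr in bH.
apply: (leq_trans (leq_mul bP bH)).
by rewrite -expnD subnKC.
Qed.
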